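(* Let $n\ge 2$ be an integer. Then $$\binom{n^3-\lfloor\frac{(n-1)^3+1}{2}\rfloor}{3n^2-3n+1}+\binom{n^3-\lfloor\frac{(n-1)^3+2}{2}\rfloor}{3n^2-3n+1}< \frac{1}{n^3}\binom{n^3+6n^2-6n+2}{n^3-1}.$$ *)

(* Defs.v *)
From mathcomp Require Import all_boot all_order all_algebra.

(* Main.v *)
Require Import Defs.
From mathcomp Require Import all_boot all_order all_algebra.
From mathcomp Require Import zify.
Import Order.TTheory GRing.Theory Num.Theory.

Lemma binG a b i j : 'C(a, i) * 'C(b, j) <= 'C(a + b, i + j).
Proof.
rewrite -binomial.Vandermonde.
have hi : i < (i + j).+1 by rewrite ltnS leq_addr.
rewrite (bigD1 (Ordinal hi)) //= addKn.
exact: leq_addr.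
Qed.

Lemma natpart n : 2 <= n ->
  n ^ 3 * ('C(n ^ 3 - ((n - 1) ^ 3 + 1) %/ 2, 3 * n ^ 2 - 3 * n + 1)
    + 'C(n ^ 3 - ((n - 1) ^ 3 + 2) %/ 2, 3 * n ^ 2 - 3 * n + 1))
  < 'C(n ^ 3 + 6 * n ^ 2 - 6 * n + 2, n ^ 3 - 1).
Proof.
move=> hn.
set N := n ^ 3; set k := 3 * n ^ 2 - 3 * n + 1.
have hkN : k <= N by rewrite /k /N; nia.
have hk2 : 2 <= k by rewrite /k; nia.
have eT : n ^ 3 + 6 * n ^ 2 - 6 * n + 2 = N + 2 * k by rewrite /N /k; nia.
have eB : (N + 2 * k) - (N - 1) = (2 * k).+1 by rewrite /N /k; nia.
rewrite eT -[X in _ < X]bin_sub; last by lia.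
rewrite eB.
set C := 'C(N, k).
have L1 : 'C(N - ((n - 1) ^ 3 + 1) %/ 2, k) <= C by apply: leq_bin2l; exact: leq_subr.
have L2 : 'C(N - ((n - 1) ^ 3 + 2) %/ 2, k) <= C by apply: leq_bin2l; exact: leq_subr.
have C0 : 0 < C by rewrite bin_gt0.
have R1 : C * 'C(2 * k, k.+1) <= 'C(N + 2 * k, (2 * k).+1).
  have -> : (2 * k).+1 = k + k.+1 by lia.
  exact: binG.
have R2 : 'C(k, 2) * 'C(k, k - 1) <= 'C(2 * k, k.+1).
  have -> : k.+1 = 2 + (k - 1) by lia.
  have -> : 2 * k = k + k by lia.
  exact: binG.
have R3 : 'C(k - 1, 1) * 'C(1, 1) <= 'C(k, 2).
  have := binG (k - 1) 1 1 1; rewrite subnK //; lia.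
rewrite bin1 bin1 muln1 in R3.
have R4 : 'C(k, k - 1) = k by rewrite bin_sub ?bin1 //; lia.
rewrite R4 in R2.
have hkk : 2 * N < (k - 1) * k.
  rewrite /k /N; clearbody N k; clear -hn; case: n hn => [|[|p]] // _.
  have -> : 3 * p.+2 ^ 2 - 3 * p.+2 + 1 - 1 = 3 * p * p + 9 * p + 6 by nia.
  have -> : 3 * p.+2 ^ 2 - 3 * p.+2 + 1 = 3 * p * p + 9 * p + 7 by nia.
  nia.
have : 2 * N * C < (k - 1) * k * C by rewrite ltn_pmul2r.
have : (k - 1) * k <= 'C(2 * k, k.+1).
  apply: leq_trans R2; exact: leq_mul.
move=> H1 H2.
have H3 : (k - 1) * k * C <= C * 'C(2 * k, k.+1) by rewrite mulnC leq_mul2l H1 orbT.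
apply: (@leq_ltn_trans (2 * N * C)).
  rewrite -mulnA mulnCA leq_mul2l; apply/orP; right.
  by rewrite mul2n -addnn leq_add.
apply: (leq_trans H2); exact: (leq_trans H3 R1).
Qed.

Theorem proposition3 (n : nat) (hn : (2 <= n)%N) :
  ((('C(n ^ 3 - ((n - 1) ^ 3 + 1) %/ 2, 3 * n ^ 2 - 3 * n + 1)
    + 'C(n ^ 3 - ((n - 1) ^ 3 + 2) %/ 2, 3 * n ^ 2 - 3 * n + 1))%N%:R : rat)
  < ((n ^ 3)%N%:R)^-1 * ('C(n ^ 3 + 6 * n ^ 2 - 6 * n + 2, n ^ 3 - 1))%N%:R)%R.
Proof.
have hN : (0 < (n ^ 3)%N%:R :> rat)%R by rewrite ltr0n expn_gt0; case: n hn.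
rewrite ltr_pdivlMl // -natrM ltr_nat.
exact: natpart.
Qed.
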